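(* For all integers $n,k\ge1$, $$\frac{L_1(k)}{n^k}<\sum_{t=k}^\infty\frac{g_{e,1}(t)}{n^t}<\frac{U_1(k)}{n^k},$$ where $L_1(k)=\left(\cosh\alpha-\frac{6\alpha\sinh\alpha}{5\sqrt{k+1}}-\frac{3}{10(k+1)^{3/2}}\right)24^{-k}$ and $U_1(k)=\left(\frac{24\cosh\alpha}{23}-\frac{\alpha\sinh\alpha}{2\sqrt{k+1}}+\frac{5}{4(k+1)^{3/2}}\right)24^{-k}$.
   Context: $\alpha=\pi/6$. $(a)_m=a(a+1)\cdots(a+m-1)$ is the rising factorial ($(a)_0=1$). For $t\ge0$, $$S_1(t)=\sum_{s=1}^t\frac{(-1)^s(1/2-s)_{s+1}}{s}\sum_{u=1}^s\frac{(-1)^u(-s)_u}{(s+u)!\,(2u-1)!}\left(\frac{\pi^2}{36}\right)^u,\qquad g_{e,1}(t)=\frac{1+S_1(t)}{24^t}.$$ *)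

(* Defs.v *)
From Stdlib Require Import Reals.
From Coquelicot Require Import Coquelicot.
Open Scope R_scope.

Definition alpha : R := PI / 6.

Fixpoint rising (a : R) (m : nat) : R :=
  match m with
  | O => 1
  | S m' => rising a m' * (a + INR m')
  end.

Fixpoint sum1 (f : nat -> R) (t : nat) : R :=
  match t with
  | O => 0
  | S t' => sum1 f t' + f t
  end.

Definition S1 (t : nat) : R :=
  sum1 (fun s =>
    (-1) ^ s * rising (1/2 - INR s) (s + 1) / INR s *
    sum1 (fun u =>
      (-1) ^ u * rising (- INR s) u / (INR (Factorial.fact (s + u)) * INR (Factorial.fact (2 * u - 1)))
      * (PI ^ 2 / 36) ^ u) s) t.

Definition g_e1 (t : nat) : R := (1 + S1 t) / 24 ^ t.

Definition L1 (k : nat) : R :=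
  (cosh alpha - 6 * alpha * sinh alpha / (5 * sqrt (INR k + 1))
   - 3 / (10 * Rpower (INR k + 1) (3 / 2))) / 24 ^ k.

Definition U1 (k : nat) : R :=
  (24 * cosh alpha / 23 - alpha * sinh alpha / (2 * sqrt (INR k + 1))
   + 5 / (4 * Rpower (INR k + 1) (3 / 2))) / 24 ^ k.

(* Main.v *)
Require Import Defs.
From Stdlib Require Import Reals Lra Lia Psatz.
From Coquelicot Require Import Coquelicot.
Open Scope R_scope.


Fixpoint bin (n k : nat) : nat :=
  match n, k with
  | _, O => 1%nat
  | O, S _ => 0%nat
  | S n', S k' => (bin n' k' + bin n' (S k'))%nat
  end.

Lemma bin_n0 n : bin n 0 = 1%nat.
Proof. destruct n; reflexivity. Qed.

Lemma bin_SS n k : bin (S n) (S k) = (bin n k + bin n (S k))%nat.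
Proof. reflexivity. Qed.

Lemma bin_small n k : (n < k)%nat -> bin n k = 0%nat.
Proof.
  revert k; induction n as [|n IH]; intros k H.
  - destruct k; [lia|reflexivity].
  - destruct k; [lia|]. rewrite bin_SS, !IH; lia.
Qed.

Lemma bin_n1 n : bin n 1 = n.
Proof. induction n; [reflexivity|]. rewrite bin_SS, bin_n0, IHn. lia. Qed.

Lemma bin_left n k : (S k * bin n (S k) = (n - k) * bin n k)%nat.
Proof.
  revert k; induction n as [|n IH]; intros k.
  - simpl. lia.
  - destruct k as [|k].
    + rewrite bin_n1, bin_n0. lia.
    + rewrite !bin_SS.
      pose proof (IH k) as H1. pose proof (IH (S k)) as H2.
      destruct (Compare_dec.le_lt_dec n k) as [Hle|Hlt].
      * rewrite (bin_small n (S k)), (bin_small n (S (S k))) by lia.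
        replace (S n - S k)%nat with 0%nat by lia. lia.
      * replace (S n - S k)%nat with (n - k)%nat by lia.
        replace (n - S k)%nat with (n - k - 1)%nat in H2 by lia.
        nia.
Qed.

Lemma bin_fact n k : (k <= n)%nat ->
  (bin n k * (Factorial.fact k * Factorial.fact (n - k)) = Factorial.fact n)%nat.
Proof.
  induction k as [|k IH]; intros H.
  - rewrite bin_n0, Nat.sub_0_r. simpl. lia.
  - pose proof (bin_left n k) as Hl.
    specialize (IH ltac:(lia)).
    replace (n - k)%nat with (S (n - S k)) in IH by lia.
    change (Factorial.fact (S k)) with (S k * Factorial.fact k)%nat.
    change (Factorial.fact (S (n - S k))) with (S (n - S k) * Factorial.fact (n - S k))%nat in IH.
    replace (n - k)%nat with (S (n - S k)) in Hl by lia.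
    rewrite <- IH.
    transitivity ((S k * bin n (S k)) * Factorial.fact k * Factorial.fact (n - S k))%nat; [ring|].
    rewrite Hl. ring.
Qed.

Lemma bin_nn n : bin n n = 1%nat.
Proof. induction n; [reflexivity|]. rewrite bin_SS, IHn, bin_small by lia. lia. Qed.


Definition b (n k : nat) : R := INR (bin n k).

Lemma b_pascal n k : b (S n) (S k) = b n k + b n (S k).
Proof. unfold b. rewrite bin_SS, plus_INR. reflexivity. Qed.

Lemma b_ge0 n k : 0 <= b n k.
Proof. apply pos_INR. Qed.

Lemma b_left n k : (k <= n)%nat -> (INR k + 1) * b n (S k) = (INR n - INR k) * b n k.
Proof.
  intros H. unfold b. rewrite <- minus_INR by exact H.
  rewrite <- S_INR, <- !mult_INR. f_equal. apply bin_left.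
Qed.

Lemma b_small n k : (n < k)%nat -> b n k = 0.
Proof. intros H; unfold b; rewrite bin_small by exact H; reflexivity. Qed.

Lemma key_rel t u : (u <= t)%nat ->
  (2 * INR t + 1) * b (2*t+1) (t+u+1) =
  (INR t + 1 - INR u) * b (2*t+1) (t+u) + (INR t + INR u + 2) * b (2*t+1) (t+u+2).
Proof.
  intros H.
  pose proof (b_left (2*t+1) (t+u) ltac:(lia)) as H1.
  pose proof (b_left (2*t+1) (t+u+1) ltac:(lia)) as H2.
  replace (S (t+u)) with (t+u+1)%nat in H1 by lia.
  replace (S (t+u+1)) with (t+u+2)%nat in H2 by lia.
  rewrite ?plus_INR, ?mult_INR in H1. rewrite ?plus_INR, ?mult_INR in H2. simpl INR in H1, H2.
  lra.
Qed.

Lemma sum1_S f u : sum1 f (S u) = sum1 f u + f (S u).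
Proof. reflexivity. Qed.

Definition V (u t : nat) : R := sum1 (fun m => b (2*t+1) (t+m)) u / 4 ^ t.

Lemma Wsum t u : (u <= t + 1)%nat ->
  (INR t + 1) * (4 * sum1 (fun m => b (2*t+1) (t+m)) u - sum1 (fun m => b (2*t+3) (t+1+m)) u)
  = INR u * b (2*t+2) (t+1+u).
Proof.
  induction u as [|u IH]; intros H.
  - simpl. lra.
  - rewrite !sum1_S. specialize (IH ltac:(lia)).
    pose proof (key_rel t u ltac:(lia)) as K.
    assert (E1: b (2*t+3) (t+1+S u) = b (2*t+2) (t+u+1) + b (2*t+2) (t+u+2))
      by (replace (2*t+3)%nat with (S (2*t+2)) by lia;
          replace (t+1+S u)%nat with (S (t+u+1)) by lia;
          rewrite b_pascal; f_equal; f_equal; lia).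
    assert (E2: b (2*t+2) (t+u+1) = b (2*t+1) (t+u) + b (2*t+1) (t+u+1))
      by (replace (2*t+2)%nat with (S (2*t+1)) by lia;
          replace (t+u+1)%nat with (S (t+u)) by lia;
          rewrite b_pascal; f_equal; f_equal; lia).
    assert (E3: b (2*t+2) (t+1+S u) = b (2*t+1) (t+u+1) + b (2*t+1) (t+u+2))
      by (replace (2*t+2)%nat with (S (2*t+1)) by lia;
          replace (t+1+S u)%nat with (S (t+u+1)) by lia;
          rewrite b_pascal; f_equal; f_equal; lia).
    assert (E4: b (2*t+2) (t+u+2) = b (2*t+1) (t+u+1) + b (2*t+1) (t+u+2))
      by (replace (2*t+2)%nat with (S (2*t+1)) by lia;
          replace (t+u+2)%nat with (S (t+u+1)) by lia;
          rewrite b_pascal; f_equal; f_equal; lia).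
    replace (t+1+u)%nat with (t+u+1)%nat in IH by lia.
    replace (t + S u)%nat with (t+u+1)%nat by lia.
    rewrite E3, E1. rewrite E4, E2. rewrite E2 in IH.
    rewrite S_INR. lra.
Qed.


Lemma sum1_ext f g n : (forall i, (1 <= i <= n)%nat -> f i = g i) -> sum1 f n = sum1 g n.
Proof.
  induction n as [|n IH]; intros H; [reflexivity|].
  rewrite !sum1_S. rewrite IH by (intros; apply H; lia). rewrite (H (S n)) by lia. reflexivity.
Qed.

Lemma sum1_plus f g n : sum1 (fun i => f i + g i) n = sum1 f n + sum1 g n.
Proof. induction n; simpl; [lra|]. rewrite IHn. lra. Qed.

Lemma sum1_minus f g n : sum1 (fun i => f i - g i) n = sum1 f n - sum1 g n.
Proof. induction n; simpl; [lra|]. rewrite IHn. lra. Qed.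

Lemma sum1_scal c f n : sum1 (fun i => c * f i) n = c * sum1 f n.
Proof. induction n; simpl; [lra|]. rewrite IHn. lra. Qed.

Lemma sum1_le f g n : (forall i, (1 <= i <= n)%nat -> f i <= g i) -> sum1 f n <= sum1 g n.
Proof.
  induction n as [|n IH]; intros H; simpl; [lra|].
  pose proof (H (S n) ltac:(lia)). pose proof (IH (fun i Hi => H i ltac:(lia))). lra.
Qed.

Lemma sum1_ge0 f n : (forall i, (1 <= i <= n)%nat -> 0 <= f i) -> 0 <= sum1 f n.
Proof.
  intros H. replace 0 with (sum1 (fun _ => 0) n).
  - apply sum1_le. intros i Hi. apply H. lia.
  - clear H. induction n; simpl; [lra|]. rewrite IHn. lra.
Qed.

Lemma pow4_pos t : 0 < 4 ^ t.
Proof. apply pow_lt; lra. Qed.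

Lemma V_diff u t : (u <= t + 1)%nat ->
  V u t - V u (S t) = INR u * b (2 * S t) (S t + u) / (INR (S t) * 4 ^ (S t)).
Proof.
  intros H. pose proof (Wsum t u H) as W. unfold V.
  rewrite (sum1_ext (fun m => b (2 * S t + 1) (S t + m)) (fun m => b (2*t+3) (t+1+m)))
    by (intros i _; f_equal; lia).
  replace (2 * S t)%nat with (2*t+2)%nat by lia.
  replace (S t + u)%nat with (t+1+u)%nat by lia.
  rewrite <- W. rewrite S_INR. simpl pow.
  pose proof (pow4_pos t). field. split; [lra|]. pose proof (pos_INR t). lra.
Qed.

Lemma V_diag u : V (S u) u = 1.
Proof.
  induction u as [|u IH].
  - unfold V. simpl. unfold b. simpl. lra.
  - pose proof (V_diff (S u) u ltac:(lia)) as D.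
    rewrite IH in D.
    assert (E: V (S (S u)) (S u) = V (S u) (S u) + b (2 * S u + 1) (S u + S (S u)) / 4 ^ (S u)).
    { unfold V. rewrite sum1_S. field. apply Rgt_not_eq, pow4_pos. }
    rewrite E.
    replace (b (2 * S u + 1) (S u + S (S u))) with 1.
    2:{ unfold b. replace (S u + S (S u))%nat with (2 * S u + 1)%nat by lia. rewrite bin_nn. reflexivity. }
    replace (b (2 * S u) (S u + S u)) with 1 in D.
    2:{ unfold b. replace (S u + S u)%nat with (2 * S u)%nat by lia. rewrite bin_nn. reflexivity. }
    assert (INR (S u) <> 0) by (apply not_0_INR; lia).
    assert (4 ^ S u <> 0) by (apply Rgt_not_eq, pow4_pos).
    replace (INR (S u) * 1 / (INR (S u) * 4 ^ S u)) with (1 / 4 ^ S u) in D by (field; auto).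
    lra.
Qed.


Definition x0 : R := PI ^ 2 / 36.
Definition c (u : nat) : R := x0 ^ u / INR (Factorial.fact (2 * u)).
Definition dV (u s : nat) : R := INR u * b (2 * s) (s + u) / (INR s * 4 ^ s).

Lemma rising_S a m : rising a (S m) = a * rising (a + 1) m.
Proof.
  revert a; induction m as [|m IH]; intros a.
  - simpl. lra.
  - change (rising a (S (S m))) with (rising a (S m) * (a + INR (S m))).
    rewrite IH. change (rising (a+1) (S m)) with (rising (a+1) m * (a + 1 + INR m)).
    rewrite S_INR. ring.
Qed.

Lemma fact_pos' n : 0 < INR (Factorial.fact n).
Proof. apply lt_0_INR. apply Factorial.lt_O_fact. Qed.

Lemma P_rising s : (-1) ^ s * rising (1/2 - INR s) (s + 1) =
  INR (Factorial.fact (2 * s)) / (2 * 4 ^ s * INR (Factorial.fact s)).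
Proof.
  induction s as [|s IH].
  - simpl. field.
  - replace (S s + 1)%nat with (S (s + 1)) by lia.
    rewrite rising_S.
    replace (1 / 2 - INR (S s) + 1) with (1/2 - INR s) by (rewrite S_INR; ring).
    replace ((-1) ^ S s * ((1 / 2 - INR (S s)) * rising (1 / 2 - INR s) (s + 1)))
      with ((INR s + 1/2) * ((-1) ^ s * rising (1 / 2 - INR s) (s + 1)))
      by (rewrite S_INR; change ((-1) ^ S s) with (-1 * (-1) ^ s); generalize ((-1) ^ s); intro; field).
    rewrite IH.
    replace (2 * S s)%nat with (S (S (2 * s))) by lia.
    rewrite !fact_simpl, !mult_INR, !S_INR.
    rewrite mult_INR. simpl INR.
    pose proof (fact_pos' s). pose proof (fact_pos' (2*s)). pose proof (pow4_pos s).
    pose proof (pos_INR s).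
    simpl pow. field. lra.
Qed.

Lemma Q_rising s u : (u <= s)%nat ->
  (-1) ^ u * rising (- INR s) u = INR (Factorial.fact s) / INR (Factorial.fact (s - u)).
Proof.
  induction u as [|u IH]; intros H.
  - simpl. rewrite Nat.sub_0_r. field. apply Rgt_not_eq, fact_pos'.
  - change (rising (- INR s) (S u)) with (rising (- INR s) u * (- INR s + INR u)).
    replace ((-1) ^ S u * (rising (- INR s) u * (- INR s + INR u)))
      with ((INR s - INR u) * ((-1) ^ u * rising (- INR s) u)) by (change ((-1) ^ S u) with (-1 * (-1) ^ u); generalize ((-1) ^ u); intro; field).
    rewrite IH by lia.
    replace (s - u)%nat with (S (s - S u)) by lia.
    rewrite fact_simpl, mult_INR.
    rewrite S_INR, minus_INR by lia. rewrite S_INR.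
    pose proof (fact_pos' (s - S u)).
    assert (INR (S u) <= INR s) by (apply le_INR; lia).
    rewrite S_INR in H1.
    field. split; lra.
Qed.

Lemma b_fact n k : (k <= n)%nat ->
  b n k = INR (Factorial.fact n) / (INR (Factorial.fact k) * INR (Factorial.fact (n - k))).
Proof.
  intros H. unfold b. rewrite <- (bin_fact n k H), !mult_INR.
  pose proof (fact_pos' k). pose proof (fact_pos' (n-k)). field. lra.
Qed.

Lemma term_eq s u : (1 <= u <= s)%nat ->
  (-1) ^ s * rising (1/2 - INR s) (s + 1) / INR s *
  ((-1) ^ u * rising (- INR s) u / (INR (Factorial.fact (s + u)) * INR (Factorial.fact (2 * u - 1)))
   * (PI ^ 2 / 36) ^ u) = dV u s * c u.
Proof.
  intros H.
  replace ((-1) ^ s * rising (1/2 - INR s) (s + 1) / INR s *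
  ((-1) ^ u * rising (- INR s) u / (INR (Factorial.fact (s + u)) * INR (Factorial.fact (2 * u - 1)))
   * (PI ^ 2 / 36) ^ u)) with
  (((-1) ^ s * rising (1/2 - INR s) (s + 1)) / INR s *
  (((-1) ^ u * rising (- INR s) u) / (INR (Factorial.fact (s + u)) * INR (Factorial.fact (2 * u - 1)))
   * (PI ^ 2 / 36) ^ u)) by ring.
  rewrite P_rising, Q_rising by lia.
  unfold dV, c, x0.
  rewrite (b_fact (2*s) (s+u)) by lia.
  replace (2 * s - (s + u))%nat with (s - u)%nat by lia.
  replace (2 * u)%nat with (S (2 * u - 1)) at 2 by lia.
  rewrite fact_simpl, mult_INR.
  replace (INR (S (2 * u - 1))) with (2 * INR u) by (rewrite S_INR, minus_INR, mult_INR by lia; simpl; ring).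
  pose proof (fact_pos' s). pose proof (fact_pos' (s-u)). pose proof (fact_pos' (s+u)).
  pose proof (fact_pos' (2*u-1)). pose proof (pow4_pos s).
  assert (0 < INR s) by (apply lt_0_INR; lia).
  assert (0 < INR u) by (apply lt_0_INR; lia).
  field. repeat split; lra.
Qed.

Definition S1' (t : nat) : R := sum1 (fun s => sum1 (fun u => dV u s * c u) s) t.

Lemma S1_S1' t : S1 t = S1' t.
Proof.
  unfold S1, S1'. apply sum1_ext. intros s Hs.
  rewrite <- sum1_scal. apply sum1_ext. intros u Hu. apply term_eq. lia.
Qed.

Definition G (t : nat) : R := sum1 (fun u => c u * (1 - V u t)) t.

Lemma S1'_G t : S1' t = G t.
Proof.
  induction t as [|t IH]; [reflexivity|].
  unfold S1'. rewrite sum1_S. fold (S1' t). rewrite IH.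
  unfold G. rewrite !sum1_S.
  rewrite (sum1_ext (fun u => c u * (1 - V u (S t))) (fun u => c u * (1 - V u t) + dV u (S t) * c u)).
  2:{ intros u Hu. pose proof (V_diff u t ltac:(lia)) as D. unfold dV. rewrite <- D. ring. }
  rewrite sum1_plus.
  pose proof (V_diff (S t) t ltac:(lia)) as D. rewrite V_diag in D. unfold dV. rewrite <- D.
  unfold dV in *. ring.
Qed.

Definition T (t : nat) : R := cosh alpha - 1 - S1 t.

Lemma T_eq t : T t = (cosh alpha - 1 - sum1 c t) + sum1 (fun u => c u * V u t) t.
Proof.
  unfold T. rewrite S1_S1', S1'_G. unfold G.
  rewrite (sum1_ext (fun u => c u * (1 - V u t)) (fun u => c u - c u * V u t)) by (intros; ring).
  rewrite sum1_minus. ring.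
Qed.


Lemma exp_series y : is_series (fun n => y ^ n / INR (Factorial.fact n)) (exp y).
Proof.
  pose proof (is_exp_Reals y) as H. unfold is_pseries in H.
  eapply is_series_ext; [|exact H]. intros n. simpl.
  rewrite pow_n_pow. reflexivity.
Qed.

Definition h (n : nat) : R := (alpha ^ n + (- alpha) ^ n) / (2 * INR (Factorial.fact n)).

Lemma cosh_series : is_series h (cosh alpha).
Proof.
  unfold cosh.
  pose proof (is_series_plus _ _ _ _ (exp_series alpha) (exp_series (- alpha))) as H.
  pose proof (is_series_scal (/2) _ _ H) as H2.
  eapply is_series_ext; [|replace ((exp alpha + exp (- alpha)) / 2) with (scal (/2) (plus (exp alpha) (exp (- alpha)))); [exact H2|]].
  - intros n. unfold h. simpl. unfold scal; simpl; unfold mult, plus; simpl.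
    pose proof (fact_pos' n). field. lra.
  - unfold scal, plus; simpl; unfold mult, plus; simpl. field.
Qed.

Lemma alpha_pos : 0 < alpha.
Proof. unfold alpha. pose proof PI_RGT_0. lra. Qed.

Lemma x0_alpha : x0 = alpha ^ 2.
Proof. unfold x0, alpha. field. Qed.

Lemma x0_bounds : 0 < x0 <= 4/9.
Proof.
  rewrite x0_alpha. unfold alpha. pose proof PI_RGT_0. pose proof PI_4. split; nra.
Qed.

Lemma h_ge0 n : 0 <= h n.
Proof.
  unfold h. pose proof (fact_pos' n).
  apply Rmult_le_pos; [|apply Rlt_le, Rinv_0_lt_compat; lra].
  pose proof (Rle_abs ((- alpha) ^ n)) as A. rewrite <- RPow_abs in A.
  pose proof alpha_pos.
  rewrite Rabs_Ropp, Rabs_right in A by lra.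
  assert (- ((-alpha)^n) <= alpha ^ n).
  { pose proof (Rle_abs (- ((- alpha) ^ n))). rewrite Rabs_Ropp, <- RPow_abs, Rabs_Ropp, Rabs_right in H1 by lra. lra. }
  lra.
Qed.

Lemma h_even m : h (2 * m) = c m.
Proof.
  unfold h, c. rewrite x0_alpha, <- pow_mult.
  replace ((- alpha) ^ (2 * m)) with (alpha ^ (2 * m)).
  2:{ rewrite !pow_mult. f_equal. ring. }
  pose proof (fact_pos' (2*m)). field. lra.
Qed.

Lemma h_odd m : h (S (2 * m)) = 0.
Proof.
  unfold h. replace ((- alpha) ^ (S (2 * m))) with (- alpha ^ (S (2*m))).
  - pose proof (fact_pos' (S (2*m))). field. lra.
  - replace (- alpha) with (-1 * alpha) by ring.
    rewrite Rpow_mult_distr. rewrite pow_1_odd. ring.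
Qed.

Lemma sum_h N : sum_n h (S (2 * N)) = 1 + sum1 c N.
Proof.
  induction N as [|N IH].
  - rewrite sum_Sn, sum_O. change (plus (h 0) (h 1) = 1 + 0).
    unfold plus; simpl. unfold h; simpl. field.
  - replace (S (2 * S N)) with (S (S (S (2 * N)))) by lia.
    rewrite sum_Sn, sum_Sn, IH.
    replace (S (S (S (2 * N)))) with (S (2 * S N)) by lia.
    rewrite h_odd. replace (S (S (2 * N))) with (2 * S N)%nat by lia.
    rewrite h_even. rewrite sum1_S. unfold plus; simpl. ring.
Qed.

Lemma sum_h_mono M M' : (M <= M')%nat -> sum_n h M <= sum_n h M'.
Proof.
  induction 1; [lra|]. rewrite sum_Sn. unfold plus; simpl. pose proof (h_ge0 (S m)). lra.
Qed.

Lemma cosh_lb N : 1 + sum1 c N <= cosh alpha.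
Proof.
  rewrite <- sum_h.
  apply (is_lim_seq_incr_compare (sum_n h) (cosh alpha)).
  - exact cosh_series.
  - intros n. apply sum_h_mono. lia.
Qed.

Lemma c_S u : c (S u) = c u * x0 / ((2 * INR u + 1) * (2 * INR u + 2)).
Proof.
  unfold c. replace (2 * S u)%nat with (S (S (2 * u))) by lia.
  rewrite !fact_simpl, !mult_INR, !S_INR, mult_INR. simpl INR.
  pose proof (fact_pos' (2*u)). pose proof (pos_INR u). simpl pow. field. pose proof (fact_pos' (u+(u+0))). repeat split; lra.
Qed.

Lemma c_pos u : 0 < c u.
Proof. unfold c. pose proof (fact_pos' (2*u)). pose proof x0_bounds. apply Rdiv_lt_0_compat; [apply pow_lt|]; lra. Qed.

Lemma c_half u : 2 * c (S u) <= c u.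
Proof.
  rewrite c_S. pose proof (c_pos u). pose proof x0_bounds. pose proof (pos_INR u).
  unfold Rdiv. rewrite Rmult_assoc.
  assert (x0 * / ((2 * INR u + 1) * (2 * INR u + 2)) <= 1/2).
  { apply (Rmult_le_reg_r ((2 * INR u + 1) * (2 * INR u + 2))). nra.
    rewrite Rmult_assoc, Rinv_l by nra. nra. }
  nra.
Qed.

Lemma cosh_ub N : cosh alpha <= 1 + sum1 c N + 2 * c (S N).
Proof.
  assert (Hj: forall j, sum1 c (N + j) + 2 * c (S (N + j)) <= sum1 c N + 2 * c (S N)).
  { induction j as [|j IH]; [rewrite Nat.add_0_r; lra|].
    replace (N + S j)%nat with (S (N + j)) by lia. simpl sum1.
    pose proof (c_half (S (N+j))). lra. }
  assert (Hb: forall M, sum_n h M <= 1 + sum1 c N + 2 * c (S N)).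
  { intros M. apply Rle_trans with (sum_n h (S (2 * (N + M)))).
    - apply sum_h_mono. lia.
    - rewrite sum_h. pose proof (Hj M). pose proof (c_pos (S (N+M))). lra. }
  pose proof (is_lim_seq_le (sum_n h) (fun _ => 1 + sum1 c N + 2 * c (S N)) (cosh alpha) (1 + sum1 c N + 2 * c (S N)) Hb cosh_series (is_lim_seq_const _)) as L.
  simpl in L. exact L.
Qed.


Lemma V_ge0 u t : 0 <= V u t.
Proof.
  unfold V. apply Rmult_le_pos; [|apply Rlt_le, Rinv_0_lt_compat, pow4_pos].
  apply sum1_ge0. intros; apply b_ge0.
Qed.

Lemma b_step k j : (k <= j)%nat -> b (2*k+1) (S j) <= b (2*k+1) j.
Proof.
  intros H. destruct (Compare_dec.le_lt_dec j (2*k+1)) as [Hj|Hj].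
  - pose proof (b_left (2*k+1) j Hj) as E.
    rewrite plus_INR, mult_INR in E. simpl INR in E.
    assert (INR k <= INR j) by (apply le_INR; lia).
    pose proof (b_ge0 (2*k+1) j). pose proof (b_ge0 (2*k+1) (S j)).
    pose proof (pos_INR k).
    nra.
  - rewrite b_small by lia. apply b_ge0.
Qed.

Lemma b_mono k m : (1 <= m)%nat -> b (2*k+1) (k+m) <= b (2*k+1) (k+1).
Proof.
  induction m as [|m IH]; intros H; [lia|].
  destruct m as [|m]; [replace (k+1)%nat with (k+1)%nat by lia; right; f_equal; lia|].
  specialize (IH ltac:(lia)).
  replace (k + S (S m))%nat with (S (k + S m)) by lia.
  pose proof (b_step k (k + S m) ltac:(lia)). lra.
Qed.

Lemma sum1_1 f : sum1 f 1 = f 1%nat.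
Proof. simpl. ring. Qed.

Lemma V_le u k : V u k <= INR u * V 1 k.
Proof.
  unfold V. rewrite sum1_1.
  replace (INR u * (b (2 * k + 1) (k + 1) / 4 ^ k)) with
    (sum1 (fun _ => b (2*k+1) (k+1)) u / 4 ^ k).
  - apply Rmult_le_compat_r; [apply Rlt_le, Rinv_0_lt_compat, pow4_pos|].
    apply sum1_le. intros i Hi. apply b_mono. lia.
  - clear. pose proof (pow4_pos k). induction u; [simpl; field; lra|].
    rewrite sum1_S, Rdiv_plus_distr, IHu, S_INR. field. lra.
Qed.

Lemma V1_S k : V 1 (S k) = V 1 k * (2 * INR k + 3) / (2 * INR k + 4).
Proof.
  unfold V. rewrite !sum1_1.
  rewrite !b_fact by lia.
  replace (2 * S k + 1 - (S k + 1))%nat with (S k) by lia.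
  replace (2 * k + 1 - (k + 1))%nat with k by lia.
  replace (2 * S k + 1)%nat with (S (S (2 * k + 1))) by lia.
  replace (S k + 1)%nat with (S (k + 1)) by lia.
  rewrite !fact_simpl. replace (k+1)%nat with (S k) by lia. rewrite !fact_simpl.
  rewrite !mult_INR, !S_INR, !plus_INR, !mult_INR. simpl INR.
  pose proof (fact_pos' k). pose proof (fact_pos' (2*k+1)). pose proof (pos_INR k). pose proof (pow4_pos k).
  simpl pow. field. repeat split; lra.
Qed.

Lemma V1_0 : V 1 0 = 1.
Proof. unfold V. simpl. unfold b. simpl. field. Qed.

Lemma V1_lb k : 5/4 <= V 1 k ^ 2 * (INR k + 5/4).
Proof.
  induction k as [|k IH].
  - rewrite V1_0. simpl. lra.
  - rewrite V1_S, S_INR. pose proof (pos_INR k).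
    set (v := V 1 k) in *.
    assert (E: (v * (2 * INR k + 3) / (2 * INR k + 4)) ^ 2 * (INR k + 1 + 5 / 4)
      = v ^ 2 * ((2 * INR k + 3) ^ 2 * (INR k + 1 + 5/4) / (2 * INR k + 4) ^ 2)) by (field; lra).
    rewrite E.
    assert (F: INR k + 5/4 <= (2 * INR k + 3) ^ 2 * (INR k + 1 + 5/4) / (2 * INR k + 4) ^ 2).
    { apply (Rmult_le_reg_r ((2 * INR k + 4) ^ 2)); [nra|].
      unfold Rdiv. rewrite Rmult_assoc, Rinv_l by nra. nra. }
    assert (0 <= v^2) by nra. nra.
Qed.

Lemma V1_ub k : V 1 k ^ 2 * (INR k + 3/2) <= 3/2.
Proof.
  induction k as [|k IH].
  - rewrite V1_0. simpl. lra.
  - rewrite V1_S, S_INR. pose proof (pos_INR k).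
    set (v := V 1 k) in *.
    assert (E: (v * (2 * INR k + 3) / (2 * INR k + 4)) ^ 2 * (INR k + 1 + 3 / 2)
      = v ^ 2 * ((2 * INR k + 3) ^ 2 * (INR k + 1 + 3/2) / (2 * INR k + 4) ^ 2)) by (field; lra).
    rewrite E.
    assert (F: (2 * INR k + 3) ^ 2 * (INR k + 1 + 3/2) / (2 * INR k + 4) ^ 2 <= INR k + 3/2).
    { apply (Rmult_le_reg_r ((2 * INR k + 4) ^ 2)); [nra|].
      unfold Rdiv. rewrite Rmult_assoc, Rinv_l by nra. nra. }
    assert (0 <= v^2) by nra. nra.
Qed.


Lemma dV_ge0 u s : 0 <= dV u s.
Proof.
  unfold dV. destruct s as [|s].
  - simpl. rewrite Rmult_0_l, Rdiv_0_r. lra.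
  - apply Rmult_le_pos; [apply Rmult_le_pos; [apply pos_INR|apply b_ge0]|].
    apply Rlt_le, Rinv_0_lt_compat, Rmult_lt_0_compat; [apply lt_0_INR; lia|apply pow4_pos].
Qed.

Lemma S1_ge0 t : 0 <= S1 t.
Proof.
  rewrite S1_S1'. unfold S1'. apply sum1_ge0. intros s _. apply sum1_ge0. intros u _.
  apply Rmult_le_pos; [apply dV_ge0|apply Rlt_le, c_pos].
Qed.

Lemma T_ge0 t : 0 <= T t.
Proof.
  rewrite T_eq. pose proof (cosh_lb t).
  assert (0 <= sum1 (fun u => c u * V u t) t).
  { apply sum1_ge0. intros. apply Rmult_le_pos; [apply Rlt_le, c_pos|apply V_ge0]. }
  lra.
Qed.

Lemma sum1_first f n : (1 <= n)%nat -> (forall i, 0 <= f i) -> f 1%nat <= sum1 f n.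
Proof.
  intros H Hf. induction n as [|n IH]; [lia|].
  destruct n as [|n]; [simpl; lra|]. rewrite sum1_S. specialize (IH ltac:(lia)).
  pose proof (Hf (S (S n))). lra.
Qed.

Lemma T_lower k : (1 <= k)%nat -> x0 / 2 * V 1 k <= T k.
Proof.
  intros Hk. rewrite T_eq. pose proof (cosh_lb k).
  pose proof (sum1_first (fun u => c u * V u k) k Hk
     (fun i => Rmult_le_pos _ _ (Rlt_le _ _ (c_pos i)) (V_ge0 i k))) as F.
  simpl in F. replace (c 1) with (x0 / 2) in F by (unfold c; simpl; field).
  lra.
Qed.

Lemma geom_sum k : sum1 (fun u => x0 ^ u) k <= x0 / (1 - x0).
Proof.
  pose proof x0_bounds.
  assert (E: forall k, sum1 (fun u => x0 ^ u) k = x0 * (1 - x0 ^ k) / (1 - x0)).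
  { induction k0; [simpl; field; lra|]. rewrite sum1_S, IHk0. simpl. field. lra. }
  rewrite E. assert (0 < x0 ^ k) by (apply pow_lt; lra).
  apply Rmult_le_compat_r; [apply Rlt_le, Rinv_0_lt_compat; lra|]. nra.
Qed.

Lemma uc_le u : (1 <= u)%nat -> INR u * c u <= x0 ^ u / 2.
Proof.
  intros H. unfold c. pose proof x0_bounds.
  replace (2 * u)%nat with (S (2 * u - 1)) by lia. rewrite fact_simpl, mult_INR.
  replace (INR (S (2 * u - 1))) with (2 * INR u) by (rewrite S_INR, minus_INR, mult_INR by lia; simpl; ring).
  pose proof (fact_pos' (2*u-1)). assert (0 < INR u) by (apply lt_0_INR; lia).
  assert (1 <= INR (Factorial.fact (2 * u - 1))).
  { apply (le_INR 1). pose proof (Factorial.lt_O_fact (2*u-1)). lia. }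
  assert (0 < x0 ^ u) by (apply pow_lt; lra).
  replace (INR u * (x0 ^ u / (2 * INR u * INR (Factorial.fact (2 * u - 1)))))
    with (x0 ^ u / 2 * / INR (Factorial.fact (2 * u - 1))) by (field; lra).
  rewrite <- (Rmult_1_r (x0 ^ u / 2)) at 2. apply Rmult_le_compat_l; [lra|].
  rewrite <- Rinv_1. apply Rinv_le_contravar; lra.
Qed.

Lemma fact_ge k : (1 <= k)%nat -> 12 * (INR k + 1) <= INR (Factorial.fact (2 * k + 2)).
Proof.
  intros H. destruct k as [|m]; [lia|].
  replace (2 * S m + 2)%nat with (S (S (S (2 * m + 1)))) by lia.
  rewrite !fact_simpl, !mult_INR.
  assert (1 <= INR (Factorial.fact (2 * m + 1))).
  { apply (le_INR 1). pose proof (Factorial.lt_O_fact (2*m+1)). lia. }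
  set (F := INR (Factorial.fact (2 * m + 1))) in *.
  rewrite !S_INR, plus_INR, mult_INR. simpl INR.
  pose proof (pos_INR m).
  assert (0 <= F - 1) by lra.
  assert (6 <= (2 * INR m + 3) * (2 * INR m + 2)) by nra.
  assert (6 <= (2 * INR m + 3) * (2 * INR m + 2) * F) by nra.
  nra.
Qed.

Lemma cS_le k : (1 <= k)%nat -> c (S k) <= x0 ^ 2 / (12 * (INR k + 1)).
Proof.
  intros H. unfold c. pose proof x0_bounds. pose proof (fact_ge k H).
  replace (2 * S k)%nat with (2 * k + 2)%nat by lia.
  assert (x0 ^ S k <= x0 ^ 2).
  { replace (S k) with (2 + (k - 1))%nat by lia. rewrite pow_add.
    assert (Hp: forall n, 0 <= x0 ^ n <= 1) by (induction n; simpl; [lra|nra]).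
    pose proof (Hp (k-1)%nat). pose proof (pow_le x0 2 ltac:(lra)).
    assert (0 <= x0 ^ 2) by nra. nra. }
  pose proof (pos_INR k). assert (0 < x0 ^ S k) by (apply pow_lt; lra).
  apply Rle_trans with (x0 ^ 2 / INR (Factorial.fact (2 * k + 2))).
  - apply Rmult_le_compat_r; [apply Rlt_le, Rinv_0_lt_compat, fact_pos'|lra].
  - apply Rmult_le_compat_l; [nra|]. apply Rinv_le_contravar; lra.
Qed.

Lemma T_upper k : (1 <= k)%nat -> T k <= 2 * (x0 ^ 2 / (12 * (INR k + 1))) + V 1 k * (x0 / (2 * (1 - x0))).
Proof.
  intros Hk. rewrite T_eq. pose proof (cosh_ub k). pose proof (cS_le k Hk).
  pose proof x0_bounds.
  assert (sum1 (fun u => c u * V u k) k <= V 1 k * (x0 / (2 * (1 - x0)))).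
  { apply Rle_trans with (sum1 (fun u => V 1 k * (x0 ^ u / 2)) k).
    - apply sum1_le. intros u Hu. pose proof (V_le u k). pose proof (uc_le u ltac:(lia)).
      pose proof (c_pos u). pose proof (V_ge0 1 k).
      apply Rle_trans with (c u * (INR u * V 1 k)); [apply Rmult_le_compat_l; lra|].
      replace (c u * (INR u * V 1 k)) with (V 1 k * (INR u * c u)) by ring.
      apply Rmult_le_compat_l; lra.
    - rewrite sum1_scal. apply Rmult_le_compat_l; [apply V_ge0|].
      rewrite (sum1_ext _ (fun u => /2 * x0 ^ u)) by (intros; field).
      rewrite sum1_scal. pose proof (geom_sum k).
      replace (x0 / (2 * (1 - x0))) with (/2 * (x0 / (1 - x0))) by (field; intro; lra). apply Rmult_le_compat_l; [lra|exact H2]. }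
  lra.
Qed.


Lemma cosh_sinh : cosh alpha ^ 2 - sinh alpha ^ 2 = 1.
Proof.
  unfold cosh, sinh.
  replace (((exp alpha + exp (- alpha)) / 2) ^ 2 - ((exp alpha - exp (- alpha)) / 2) ^ 2)
    with (exp alpha * exp (- alpha)) by field.
  rewrite <- exp_plus, Rplus_opp_r, exp_0. reflexivity.
Qed.

Lemma sinh_pos : 0 < sinh alpha.
Proof. rewrite <- sinh_0. apply sinh_lt. apply alpha_pos. Qed.

Lemma cosh_b : 1 + x0 / 2 <= cosh alpha <= 1 + x0 / 2 + x0 ^ 2 / 12.
Proof.
  pose proof (cosh_lb 1). pose proof (cosh_ub 1).
  replace (sum1 c 1) with (x0 / 2) in * by (unfold c; simpl; field).
  replace (c 2) with (x0 ^ 2 / 24) in * by (unfold c; simpl; field).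
  lra.
Qed.

Definition A : R := alpha * sinh alpha.

Lemma A_sq : A ^ 2 = x0 * (cosh alpha ^ 2 - 1).
Proof. unfold A. rewrite x0_alpha. pose proof cosh_sinh. replace (cosh alpha ^ 2 - 1) with (sinh alpha ^ 2) by lra. ring. Qed.

Lemma A_pos : 0 < A.
Proof. unfold A. pose proof alpha_pos. pose proof sinh_pos. nra. Qed.

Lemma A_ge : x0 <= A.
Proof.
  pose proof A_sq. pose proof A_pos. pose proof cosh_b. pose proof x0_bounds.
  assert (x0 ^ 2 <= A ^ 2).
  { rewrite H. assert (1 + x0 <= cosh alpha ^ 2) by nra. nra. }
  nra.
Qed.

Lemma A_le : A <= 1097/1000 * x0.
Proof.
  pose proof A_sq. pose proof A_pos. pose proof cosh_b. pose proof x0_bounds.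
  set (h := x0 / 2 + x0 ^ 2 / 12).
  assert (cosh alpha ^ 2 - 1 <= 2 * h + h ^ 2).
  { assert (1 <= cosh alpha) by nra. assert (0 <= h) by (unfold h; nra).
    assert (cosh alpha <= 1 + h) by (unfold h; lra). nra. }
  assert (2 * h + h ^ 2 <= x0 * (12034 / 10000)).
  { unfold h. assert (x0^2 <= 4/9 * x0) by nra. assert (x0^3 <= (4/9)^2 * x0) by nra.
    assert (x0^4 <= (4/9)^3 * x0) by nra. nra. }
  assert (A ^ 2 <= (1097/1000 * x0) ^ 2) by nra.
  nra.
Qed.

Lemma NumU k : (1 <= k)%nat ->
  A / (2 * sqrt (INR k + 1)) - 5 / (4 * ((INR k + 1) * sqrt (INR k + 1))) < x0 / 2 * V 1 k.
Proof.
  intros Hk. pose proof (V1_lb k) as L. pose proof (V_ge0 1 k) as V0.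
  pose proof A_le. pose proof A_pos. pose proof x0_bounds.
  assert (Hy: 2 <= INR k + 1) by (apply (le_INR 1) in Hk; simpl in Hk; lra).
  set (y := INR k + 1) in *. set (v := V 1 k) in *.
  replace (INR k + 5/4) with (y + 1/4) in L by (unfold y; lra).
  assert (Hr: 0 < sqrt y) by (apply sqrt_lt_R0; lra).
  pose proof (sqrt_sqrt y ltac:(lra)) as Hrr.
  set (r := sqrt y) in *.
  assert (K: A < x0 * (v * r) + 5 / (2 * y)).
  { assert (Q: (v * r) ^ 2 * (y + 1/4) >= 5/4 * y) by (replace ((v*r)^2) with (v^2 * (r*r)) by ring; rewrite Hrr; nra).
    assert (0 <= v * r) by nra.
    destruct (Compare_dec.le_lt_dec k 5) as [Hk5|Hk5].
    - assert (Hy6: y <= 6) by (unfold y; apply le_INR in Hk5; simpl in Hk5; lra).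
      assert (1 <= v * r) by nra.
      assert (5 / (2 * y) >= 5/12).
      { apply Rle_ge. unfold Rdiv. apply Rmult_le_compat_l; [lra|]. apply Rinv_le_contravar; lra. }
      nra.
    - assert (Hy7: 7 <= y) by (unfold y; assert (H6: (6 <= k)%nat) by lia; apply le_INR in H6; simpl in H6; lra).
      assert (W: (1097/1000)^2 < (v * r) ^ 2) by nra.
      assert (1097/1000 < v * r) by nra.
      assert (0 < 5 / (2 * y)) by (apply Rdiv_lt_0_compat; lra).
      nra. }
  assert (E: A / (2 * r) - 5 / (4 * (y * r)) = (A - 5 / (2 * y)) / (2 * r)) by (field; lra).
  rewrite E.
  apply (Rmult_lt_reg_r (2 * r)); [lra|].
  unfold Rdiv at 1. rewrite Rmult_assoc, Rinv_l by lra. nra.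
Qed.

Lemma NumL k : (1 <= k)%nat ->
  2 * (x0 ^ 2 / (12 * (INR k + 1))) + V 1 k * (x0 / (2 * (1 - x0))) <
  6 * A / (5 * sqrt (INR k + 1)) + 3 / (10 * ((INR k + 1) * sqrt (INR k + 1))).
Proof.
  intros Hk. pose proof (V1_ub k) as U. pose proof (V_ge0 1 k) as V0.
  pose proof A_ge. pose proof A_pos. pose proof x0_bounds.
  assert (Hy: 2 <= INR k + 1) by (apply (le_INR 1) in Hk; simpl in Hk; lra).
  set (y := INR k + 1) in *. set (v := V 1 k) in *.
  replace (INR k + 3/2) with (y + 1/2) in U by (unfold y; lra).
  assert (Hr: 0 < sqrt y) by (apply sqrt_lt_R0; lra).
  pose proof (sqrt_sqrt y ltac:(lra)) as Hrr.
  set (r := sqrt y) in *.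
  assert (Hr2: 1414/1000 <= r) by nra.
  assert (Vr: v * r <= 12248/10000).
  { assert ((v * r) ^ 2 <= 3/2) by (replace ((v*r)^2) with (v^2 * (r*r)) by ring; rewrite Hrr; nra).
    assert (0 <= v * r) by nra. nra. }
  assert (P: 0 < 3 / (10 * (y * r))) by (apply Rdiv_lt_0_compat; nra).
  assert (E1: 2 * (x0 ^ 2 / (12 * y)) = x0 * (x0 / (6 * r)) / r) by (rewrite <- Hrr; field; lra).
  assert (E2: v * (x0 / (2 * (1 - x0))) = x0 * (v * r) * / (2 * (1 - x0)) / r) by (field; nra).
  assert (E3: 6 * A / (5 * r) = 6 * A / 5 / r) by (field; lra).
  rewrite E1, E2, E3.
  assert (F1: x0 / (6 * r) <= 525 / 10000).
  { apply (Rmult_le_reg_r (6 * r)); [lra|]. unfold Rdiv. rewrite Rmult_assoc, Rinv_l by lra. nra. }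
  assert (F2: / (2 * (1 - x0)) <= 9 / 10).
  { rewrite <- (Rinv_inv (9/10)). apply Rinv_le_contravar; [lra|]. lra. }
  assert (F3: 0 < / (2 * (1 - x0))) by (apply Rinv_0_lt_compat; lra).
  assert (x0 * (x0 / (6 * r)) + x0 * (v * r) * / (2 * (1 - x0)) < 6 * A / 5).
  { assert (x0 * (x0 / (6 * r)) <= x0 * (525/10000)) by (apply Rmult_le_compat_l; lra).
    assert ((v * r) * / (2 * (1 - x0)) <= 12248/10000 * (9/10)) by (apply Rmult_le_compat; nra).
    assert (x0 * ((v * r) * / (2 * (1 - x0))) <= x0 * (12248/10000 * (9/10))) by (apply Rmult_le_compat_l; lra).
    nra. }
  assert (G: (x0 * (x0 / (6 * r)) + x0 * (v * r) * / (2 * (1 - x0))) / r < 6 * A / 5 / r).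
  { unfold Rdiv at 1 3. apply Rmult_lt_compat_r; [apply Rinv_0_lt_compat; lra|]. lra. }
  unfold Rdiv in G |- *. lra.
Qed.


Lemma Rpower_32 y : 0 < y -> Rpower y (3/2) = y * sqrt y.
Proof.
  intros H. replace (3/2) with (1 + /2) by field.
  rewrite Rpower_plus, Rpower_1, Rpower_sqrt by exact H. reflexivity.
Qed.

Lemma term_eq2 (N : R) m : 0 < N ->
  g_e1 m / N ^ m = (cosh alpha - T m) * (/ (24 * N)) ^ m.
Proof.
  intros HN. unfold g_e1, T.
  rewrite pow_inv, Rpow_mult_distr.
  assert (0 < 24 ^ m) by (apply pow_lt; lra).
  assert (0 < N ^ m) by (apply pow_lt; lra).
  field. lra.
Qed.

Theorem mainTheorem16 (n k : nat) (hn : (1 <= n)%nat) (hk : (1 <= k)%nat) :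
  exists s : R,
    is_series (fun j : nat => g_e1 (k + j) / INR n ^ (k + j)) s /\
    L1 k / INR n ^ k < s /\ s < U1 k / INR n ^ k.
Proof.
  set (N := INR n).
  assert (HN: 1 <= N) by (unfold N; apply (le_INR 1) in hn; simpl in hn; lra).
  set (q := / (24 * N)).
  assert (Hq: 0 < q <= 1/24).
  { unfold q. split; [apply Rinv_0_lt_compat; lra|].
    rewrite <- (Rinv_inv 24) at 2. unfold Rdiv. rewrite Rmult_1_l. apply Rinv_le_contravar; lra. }
  set (B := cosh alpha).
  assert (HB: 1 <= B) by (pose proof cosh_b; pose proof x0_bounds; unfold B; lra).
  set (a := fun j : nat => g_e1 (k + j) / N ^ (k + j)).
  assert (Ha: forall j, a j = (B - T (k + j)) * q ^ (k + j)).
  { intros j. unfold a, B, q. apply term_eq2. lra. }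
  assert (Hqp: forall m, 0 < q ^ m) by (intros; apply pow_lt; lra).
  assert (Hab: forall j, 0 <= a j <= B * q ^ k * q ^ j).
  { intros j. rewrite Ha. rewrite pow_add.
    pose proof (T_ge0 (k+j)). pose proof (S1_ge0 (k+j)).
    assert (0 <= B - T (k + j)) by (unfold B, T; lra).
    pose proof (Hqp k). pose proof (Hqp j).
    assert (0 < q ^ k * q ^ j) by (apply Rmult_lt_0_compat; lra).
    split; [apply Rmult_le_pos; lra|].
    rewrite Rmult_assoc. apply Rmult_le_compat_r; lra. }
  assert (Hgeo: is_series (fun j => q ^ j) (/ (1 - q))) by (apply is_series_geom; rewrite Rabs_right; lra).
  assert (Hbs: is_series (fun j => B * q ^ k * q ^ j) (B * q ^ k * / (1 - q))).
  { apply (is_series_scal_l (B * q ^ k)) in Hgeo. exact Hgeo. }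
  assert (Hex: ex_series a).
  { apply (ex_series_le a (fun j => B * q ^ k * q ^ j)).
    - intros j. unfold norm; simpl. unfold abs; simpl. rewrite Rabs_right by (destruct (Hab j); lra).
      apply Hab.
    - eexists; exact Hbs. }
  exists (Series a). split; [apply Series_correct; exact Hex|].
  rewrite (Series_incr_1 a Hex).
  assert (Hex1: ex_series (fun j => a (S j))).
  { apply (proj1 (ex_series_incr_1 a)). exact Hex. }
  assert (Hs0: 0 <= Series (fun j => a (S j))).
  { replace 0 with (Series (fun j => 0 * a (S j))).
    - apply Series_le; [intros j; destruct (Hab (S j)); lra|exact Hex1].
    - rewrite Series_scal_l. ring. }
  assert (Hs1: Series (fun j => a (S j)) <= B * q ^ k * q * / (1 - q)).
  { apply Rle_trans with (Series (fun j => (B * q ^ k * q) * q ^ j)).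
    - apply Series_le.
      + intros j. destruct (Hab (S j)). split; [lra|]. simpl in H0. lra.
      + eexists. apply (is_series_scal_l (B * q ^ k * q)) in Hgeo. exact Hgeo.
    - rewrite Series_scal_l, Series_geom by (rewrite Rabs_right; lra). lra. }
  assert (Ha0: a 0%nat = (B - T k) * q ^ k) by (rewrite Ha, Nat.add_0_r; reflexivity).
  rewrite Ha0.
  assert (Hy: 0 < INR k + 1) by (pose proof (pos_INR k); lra).
  assert (EL: L1 k / N ^ k = (B - 6 * A / (5 * sqrt (INR k + 1)) - 3 / (10 * ((INR k + 1) * sqrt (INR k + 1)))) * q ^ k).
  { unfold L1. rewrite Rpower_32 by exact Hy. unfold q, A, B. rewrite pow_inv, Rpow_mult_distr.
    assert (0 < 24 ^ k) by (apply pow_lt; lra). assert (0 < N ^ k) by (apply pow_lt; lra).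
    assert (0 < sqrt (INR k + 1)) by (apply sqrt_lt_R0; lra).
    field. repeat split; try lra; nra. }
  assert (EU: U1 k / N ^ k = (24 * B / 23 - A / (2 * sqrt (INR k + 1)) + 5 / (4 * ((INR k + 1) * sqrt (INR k + 1)))) * q ^ k).
  { unfold U1. rewrite Rpower_32 by exact Hy. unfold q, A, B. rewrite pow_inv, Rpow_mult_distr.
    assert (0 < 24 ^ k) by (apply pow_lt; lra). assert (0 < N ^ k) by (apply pow_lt; lra).
    assert (0 < sqrt (INR k + 1)) by (apply sqrt_lt_R0; lra).
    field. repeat split; try lra; nra. }
  rewrite EL, EU. pose proof (Hqp k) as Hqk.
  split.
  - pose proof (T_upper k hk). pose proof (NumL k hk).
    assert (T k < 6 * A / (5 * sqrt (INR k + 1)) + 3 / (10 * ((INR k + 1) * sqrt (INR k + 1)))) by lra.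
    nra.
  - pose proof (T_lower k hk). pose proof (NumU k hk).
    assert (Hqq: / (1 - q) <= 24 / 23).
    { rewrite <- (Rinv_inv (24/23)). apply Rinv_le_contravar; lra. }
    assert (B * q ^ k * q * / (1 - q) = q ^ k * (B * (/ (1 - q) - 1))) by (field; lra).
    assert (B * (/ (1 - q) - 1) <= B * (24/23 - 1)) by (apply Rmult_le_compat_l; lra).
    nra.
Qed.
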